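(* Let $G$ be a modular noetherian right $\ell$-group with degree homomorphism $\deg : G \to \mathbb{Z}$. Then for all $g,h \in G$, \[ \deg(g) + \deg(h) = \deg(g \vee h) + \deg(g \wedge h). \]
   Context: A right $\ell$-group is a group $G$ (identity $e$) with a right-invariant partial order under which $G$ is a lattice ($\wedge$, $\vee$). It is modular if the lattice is modular. It is noetherian if for each $g$ the set $\{h \geq g\}$ satisfies the descending chain condition and the set $\{h \leq g\}$ satisfies the ascending chain condition. Let $G^- = \{g \leq e\}$, and let $X(G^-)$ be the set of elements covered by $e$. In such a group every $g \in G^-$ is a product of elements of $X(G^-)$, and all such factorizations have the same length. The degree homomorphism $\deg : G \to \mathbb{Z}$ is the unique group homomorphism assigning to each $g \in G^-$ this length. *)

(* Defs.v *)
Set Implicit Arguments.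
From Stdlib Require Import ZArith List.
Import ListNotations.

Section RightLGroup.
Variables (T : Type) (mul : T -> T -> T) (inv : T -> T) (e : T)
          (le : T -> T -> Prop) (meet join : T -> T -> T).

Definition lt (x y : T) : Prop := le x y /\ x <> y.

Definition is_group : Prop :=
  (forall x y z, mul x (mul y z) = mul (mul x y) z) /\
  (forall x, mul e x = x /\ mul x e = x) /\
  (forall x, mul (inv x) x = e /\ mul x (inv x) = e).

Definition is_partial_order : Prop :=
  (forall x, le x x) /\
  (forall x y, le x y -> le y x -> x = y) /\
  (forall x y z, le x y -> le y z -> le x z).

Definition is_lattice_ops : Prop :=
  (forall x y, le (meet x y) x /\ le (meet x y) y /\
               forall z, le z x -> le z y -> le z (meet x y)) /\
  (forall x y, le x (join x y) /\ le y (join x y) /\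
               forall z, le x z -> le y z -> le (join x y) z).

Definition right_invariant : Prop :=
  forall x y z, le x y -> le (mul x z) (mul y z).

Definition right_lgroup : Prop :=
  is_group /\ is_partial_order /\ is_lattice_ops /\ right_invariant.

Definition modular : Prop :=
  forall x y z, le x z -> join x (meet y z) = meet (join x y) z.

Definition DCC (P : T -> Prop) : Prop :=
  ~ exists f : nat -> T, (forall n, P (f n)) /\ (forall n, lt (f (Datatypes.S n)) (f n)).
Definition ACC (P : T -> Prop) : Prop :=
  ~ exists f : nat -> T, (forall n, P (f n)) /\ (forall n, lt (f n) (f (Datatypes.S n))).

Definition noetherian : Prop :=
  forall g, DCC (fun h => le g h) /\ ACC (fun h => le h g).

Definition negcone (g : T) : Prop := le g e.
Definition covered_by_e (x : T) : Prop :=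
  lt x e /\ ~ exists y, lt x y /\ lt y e.

Definition prod_list (xs : list T) : T := fold_right mul e xs.

Definition is_degree_hom (deg : T -> Z) : Prop :=
  (forall x y, deg (mul x y) = (deg x + deg y)%Z) /\
  (forall g xs, negcone g -> Forall covered_by_e xs -> prod_list xs = g ->
     deg g = Z.of_nat (length xs)).

End RightLGroup.

(* Main.v *)
Require Import Defs.
From Stdlib Require Import ZArith List Lia Classical ClassicalEpsilon.

Lemma chain_build (T : Type) (S : T -> Prop) (R : T -> T -> Prop) :
  (forall x, S x -> exists y, S y /\ R x y) ->
  forall x0, S x0 -> exists f : nat -> T, forall n, S (f n) /\ R (f n) (f (Datatypes.S n)).
Proof.
  intros H x0 H0.
  assert (step : forall p : {x | S x}, {q : {x | S x} | R (proj1_sig p) (proj1_sig q)}).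
  { intro p. destruct (constructive_indefinite_description _ (H _ (proj2_sig p))) as [y [Sy Ry]].
    exists (exist _ y Sy). exact Ry. }
  exists (fun n => proj1_sig (Nat.iter n (fun p => proj1_sig (step p)) (exist _ x0 H0))).
  intro n. split.
  - apply proj2_sig.
  - simpl. apply (proj2_sig (step _)).
Qed.

Theorem mainTheorem4 (T : Type) (mul : T -> T -> T) (inv : T -> T) (e : T)
  (le : T -> T -> Prop) (meet join : T -> T -> T) (deg : T -> Z) :
  right_lgroup mul inv e le meet join ->
  modular le meet join ->
  noetherian le ->
  is_degree_hom mul e le deg ->
  forall g h : T, (deg g + deg h = deg (join g h) + deg (meet g h))%Z.
Proof.
  intros [[assoc [idm invm]] [[refl [antis trans]] [[Hmeet Hjoin] rinv]]] Hmod Hnoeth [Hdeg Hfact] g h.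
  set (cover := fun x y => lt le x y /\ ~ exists z, lt le x z /\ lt le z y).
  assert (K1 : forall x y, mul (mul x (inv y)) y = x).
  { intros x y. rewrite <- assoc. rewrite (proj1 (invm y)). apply (proj2 (idm x)). }
  assert (K2 : forall x y, mul (mul x y) (inv y) = x).
  { intros x y. rewrite <- assoc. rewrite (proj2 (invm y)). apply (proj2 (idm x)). }
  assert (De : deg e = 0%Z).
  { pose proof (Hdeg e e) as H. rewrite (proj1 (idm e)) in H. lia. }
  assert (Dinv : forall y, deg (inv y) = (- deg y)%Z).
  { intro y. pose proof (Hdeg (inv y) y) as H. rewrite (proj1 (invm y)) in H. lia. }
  assert (cover_deg : forall x y, cover x y -> deg x = (deg y + 1)%Z).
  { intros x y [[Hle Hne] Hno].
    set (u := mul x (inv y)).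
    assert (Cu : covered_by_e e le u).
    { split; [split|].
      - pose proof (rinv x y (inv y) Hle) as H. rewrite (proj2 (invm y)) in H. exact H.
      - intro E. apply Hne. rewrite <- (K1 x y). fold u. rewrite E. apply (proj1 (idm y)).
      - intros [z [[H1 H2] [H3 H4]]]. apply Hno. exists (mul z y). split; split.
        + pose proof (rinv _ _ y H1) as H. unfold u in H. rewrite K1 in H. exact H.
        + intro E. apply H2. unfold u. rewrite E. apply K2.
        + pose proof (rinv _ _ y H3) as H. rewrite (proj1 (idm y)) in H. exact H.
        + intro E. apply H4. rewrite <- (K2 z y). rewrite E. apply (proj2 (invm y)). }
    assert (Hu : deg u = 1%Z).
    { apply (Hfact u (u :: nil)).
      - exact (proj1 (proj1 Cu)).
      - constructor; [exact Cu | constructor].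
      - simpl. apply (proj2 (idm u)). }
    unfold u in Hu. rewrite Hdeg, Dinv in Hu. lia. }
  assert (join_comm : forall x y, join x y = join y x).
  { assert (A : forall x y, le (join x y) (join y x)).
    { intros x y. destruct (Hjoin y x) as [H1 [H2 _]]. apply (proj2 (proj2 (Hjoin x y))); assumption. }
    intros; apply antis; apply A. }
  assert (meet_le_eq : forall x c, le c x -> meet x c = c).
  { intros x c H. apply antis. apply (proj1 (proj2 (Hmeet x c))).
    apply (proj2 (proj2 (Hmeet x c))); [exact H | apply refl]. }
  assert (join_le_eq : forall a x, le x a -> join a x = a).
  { intros a x H. apply antis. apply (proj2 (proj2 (Hjoin a x))); [apply refl | exact H].
    apply (proj1 (Hjoin a x)). }
  set (m := meet g h).
  assert (mg : le m g) by apply (proj1 (Hmeet g h)).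
  assert (mh : le m h) by apply (proj1 (proj2 (Hmeet g h))).
  assert (hgm : le (meet h g) m).
  { apply (proj2 (proj2 (Hmeet g h))). apply (proj1 (proj2 (Hmeet h g))). apply (proj1 (Hmeet h g)). }
  assert (back : forall a, le m a -> le a g -> meet (join a h) g = a).
  { intros a Hma Hag. rewrite <- (Hmod a h g Hag). apply join_le_eq. eapply trans; eassumption. }
  assert (cover_tr : forall a b, le m a -> le b g -> cover a b -> cover (join a h) (join b h)).
  { intros a b Hma Hbg [[Hab Hne] Hno].
    assert (Hag : le a g) by (eapply trans; eassumption).
    assert (Hmb : le m b) by (eapply trans; eassumption).
    assert (Hb_bh : le b (join b h)) by apply (proj1 (Hjoin b h)).
    assert (Hh_bh : le h (join b h)) by apply (proj1 (proj2 (Hjoin b h))).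
    split; [split|].
    - apply (proj2 (proj2 (Hjoin a h))); [exact (trans _ _ _ Hab Hb_bh) | exact Hh_bh].
    - intro E. apply Hne. rewrite <- (back a Hma Hag), <- (back b Hmb Hbg). rewrite E. reflexivity.
    - intros [c [[H1 H2] [H3 H4]]].
      set (d := meet g c).
      assert (Had : le a d).
      { apply (proj2 (proj2 (Hmeet g c))); [exact Hag|]. eapply trans; [apply (proj1 (Hjoin a h)) | exact H1]. }
      assert (Hdb : le d b).
      { rewrite <- (back b Hmb Hbg). apply (proj2 (proj2 (Hmeet _ _))).
        - eapply trans; [apply (proj1 (proj2 (Hmeet g c))) | exact H3].
        - apply (proj1 (Hmeet g c)). }
      assert (Hhc : le h c) by (eapply trans; [apply (proj1 (proj2 (Hjoin a h))) | exact H1]).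
      assert (Ec : join h d = c).
      { unfold d. rewrite (Hmod h g c Hhc). apply meet_le_eq.
        eapply trans; [exact H3|]. apply (proj2 (proj2 (Hjoin b h))).
        - eapply trans; [exact Hbg | apply (proj1 (proj2 (Hjoin h g)))].
        - apply (proj1 (Hjoin h g)). }
      destruct (classic (d = a)) as [Da|Da].
      { apply H2. rewrite <- Ec, Da. apply join_comm. }
      destruct (classic (d = b)) as [Db|Db].
      { apply H4. rewrite <- Ec, Db. apply join_comm. }
      apply Hno. exists d. split; split; auto. }
  assert (maxel : forall b, le m b -> m <> b -> exists a, le m a /\ cover a b).
  { intros b Hmb Hne. apply NNPP. intro Hnot.
    destruct (chain_build T (fun a => le m a /\ lt le a b) (lt le)) with (x0 := m) as [f Hf].
    - intros a [Hma Hab]. apply NNPP. intro Hn. apply Hnot. exists a. split; [exact Hma|].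
      split; [exact Hab|]. intros [z [Haz Hzb]]. apply Hn. exists z.
      split; [split; [eapply trans; [exact Hma | apply (proj1 Haz)] | exact Hzb] | exact Haz].
    - split; [apply refl | split; assumption].
    - apply (proj2 (Hnoeth b)). exists f. split; intro n; [apply (proj1 (proj2 (proj1 (Hf n)))) | apply (proj2 (Hf n))]. }
  assert (main : forall b, le m b -> le b g -> (deg b - deg (join b h) = deg m - deg h)%Z).
  { apply NNPP. intro Hnot. apply not_all_ex_not in Hnot. destruct Hnot as [b0 Hb0].
    destruct (chain_build T (fun b => le m b /\ ~ (le b g -> (deg b - deg (join b h) = deg m - deg h)%Z))
                (fun x y => lt le y x)) with (x0 := b0) as [f Hf].
    - intros b [Hmb Hb]. apply NNPP. intro Hn. apply Hb. intro Hbg.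
      destruct (classic (m = b)) as [Eb|Eb].
      { rewrite <- Eb. rewrite join_comm, (join_le_eq h m mh). lia. }
      destruct (maxel b Hmb Eb) as [a [Hma Hc]].
      assert (IH : (deg a - deg (join a h) = deg m - deg h)%Z).
      { apply NNPP. intro Hna. apply Hn. exists a. split; [split; [exact Hma|] | exact (proj1 Hc)].
        intro Hx. apply Hna. apply Hx. eapply trans; [apply (proj1 (proj1 Hc)) | exact Hbg]. }
      pose proof (cover_deg _ _ Hc). pose proof (cover_deg _ _ (cover_tr a b Hma Hbg Hc)). lia.
    - split.
      + apply NNPP. intro Hn. apply Hb0. intro H. exfalso. apply Hn. exact H.
      + intro H. apply Hb0. intros _. exact H.
    - apply (proj1 (Hnoeth m)). exists f. split; intro n; [apply (proj1 (proj1 (Hf n))) | apply (proj2 (Hf n))]. }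
  pose proof (main g mg (refl g)). fold m. lia.
Qed.
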